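(* Let $G$ be a finite connected graph with node set $V$ and let $r$ be a ranking of $V$. There is a one-to-all distance based algorithm which computes all eccentricities $e(v)$, $v\in V$, a tight lower certificate $L\subseteq A_r(V)$, and the set $U^{\preceq}$ (which is the unique minimum-size tight upper certificate), using $|U^{\preceq}|+2|L|$ one-to-all distance queries.
   Context: $G$ is undirected, unweighted, connected with finite node set $V$; $d$ is shortest-path distance, $e(u)=\max_v d(u,v)$. A ranking $r$ is an injective map from $V$ to a totally ordered set; the antipode $A_r(u)$ is the node $v$ maximizing $(d(u,v),r(v))$ lexicographically; $A_r(V)=\{A_r(u):u\in V\}$. A one-to-all distance query from $x$ computes $(d(x,v))_{v\in V}$. For $L\subseteq V$, $e_L(v)=\max_{x\in L}d(v,x)$; for $U\subseteq V$, $e^U(v)=\min_{x\in U}(d(v,x)+e(x))$. $L$ is a tight lower certificate if $e_L(v)=e(v)$ for all $v$; $U$ is a tight upper certificate if $e^U(v)=e(v)$ for all $v$. Write $u\preceq x$ if $e(u)=d(u,x)+e(x)$; $U^{\preceq}$ is the set of nodes $x$ that are maximal for $\preceq$ (i.e. $x\preceq y$ implies $y=x$). *)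

(* Defs.v *)
From mathcomp Require Import all_boot all_order.
Set Implicit Arguments. Unset Strict Implicit. Unset Printing Implicit Defensive.
Import Order.TTheory.

Section Graph.
Variable V : finType.
Variable adj : rel V.

Definition undirected_graph := symmetric adj /\ irreflexive adj.
Definition connected_graph := forall u v : V, connect adj u v.

Definition walk_of_len (n : nat) (u v : V) : bool :=
  [exists p : n.-tuple V, path adj u p && (last u p == v)].

(* shortest-path distance: least length of a walk (a shortest walk is a path);
   default #|V| never used for connected graphs *)
Definition dist (u v : V) : nat :=
  \big[minn/#|V|]_(n < #|V| | walk_of_len n u v) n.

Definition ecc (u : V) : nat := \max_(v : V) dist u v.

Definition eccL (L : {set V}) (v : V) : nat := \max_(x in L) dist v x.

Definition tight_lower (L : {set V}) : Prop := forall v, eccL L v = ecc v.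

(* e^U(v) = min_{x in U} (d(v,x) + e(x)); "e^U(v) = e(v)" written out:
   the minimum over U is attained with value e(v). *)
Definition tight_upper (U : {set V}) : Prop :=
  forall v, (exists2 x, x \in U & dist v x + ecc x = ecc v) /\
            (forall x, x \in U -> ecc v <= dist v x + ecc x).

Definition prec (u x : V) : bool := ecc u == dist u x + ecc x.

Definition Umax : {set V} := [set x | [forall y, prec x y ==> (y == x)]].

Definition is_antipode (disp : Order.disp_t) (R : orderType disp) (r : V -> R)
  (u v : V) : bool :=
  [forall w, (dist u w < dist u v) || ((dist u w == dist u v) && (r w <= r v)%O)].

Definition antipodes (disp : Order.disp_t) (R : orderType disp) (r : V -> R)
  : {set V} := [set v | [exists u, is_antipode r u v]].

End Graph.

(* One-to-all distance based algorithms on node set V: decision trees whose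
   only access to the graph is a query "Ask x", answered by the distance
   vector (d(x,v))_{v in V}; leaves output (eccentricities, L, U). *)
Inductive dalg (V : finType) : Type :=
| Ask : V -> ((V -> nat) -> dalg V) -> dalg V
| Ret : (V -> nat) -> {set V} -> {set V} -> dalg V.

Fixpoint run_out (V : finType) (d : V -> V -> nat) (A : dalg V)
  : (V -> nat) * {set V} * {set V} :=
  match A with
  | Ask x k => run_out d (k (d x))
  | Ret e L U => (e, L, U)
  end.

Fixpoint run_queries (V : finType) (d : V -> V -> nat) (A : dalg V) : nat :=
  match A with
  | Ask x k => (run_queries d (k (d x))).+1
  | Ret _ _ _ => 0
  end.

(* Main.v *)
Require Import Defs.
From mathcomp Require Import all_boot all_order.
From mathcomp Require Import zify.
Set Implicit Arguments. Unset Strict Implicit. Unset Printing Implicit Defensive.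
Import Order.TTheory.

Section BigMin.
Variables (I : finType) (P : pred I) (F : I -> nat) (b : nat).
Lemma bigmin_leF i : P i -> \big[minn/b]_(j | P j) F j <= F i.
Proof.
move=> Pi; rewrite -big_filter.
have: i \in [seq j <- index_enum I | P j] by rewrite mem_filter Pi mem_index_enum.
elim: [seq j <- index_enum I | P j] => [|y s IH] //.
rewrite inE big_cons => /orP [/eqP <- | /IH h]; first exact: geq_minl.
by rewrite geq_min h orbT.
Qed.
Lemma bigmin_ge m : m <= b -> (forall i, P i -> m <= F i) ->
  m <= \big[minn/b]_(j | P j) F j.
Proof.
move=> mb H; apply: (big_ind (fun x => m <= x)) => //.
by move=> x y hx hy; rewrite leq_min hx hy.
Qed.
Lemma bigmin_cases : \big[minn/b]_(j | P j) F j = b \/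
  exists2 i, P i & \big[minn/b]_(j | P j) F j = F i.
Proof.
have: (\big[minn/b]_(j | P j) F j == b) ||
      [exists i, P i && (\big[minn/b]_(j | P j) F j == F i)].
  apply: (big_ind (fun x => (x == b) || [exists i, P i && (x == F i)])).
  - by rewrite eqxx.
  - by move=> x y hx hy; rewrite /minn; case: ifP.
  - by move=> i Pi; apply/orP; right; apply/existsP; exists i; rewrite Pi eqxx.
case/orP=> [/eqP -> | /existsP [i /andP [Pi /eqP E]]]; first by left.
by right; exists i.
Qed.
Lemma bigmin_leb : \big[minn/b]_(j | P j) F j <= b.
Proof.
rewrite -big_filter; elim: [seq j <- index_enum I | P j] => [|y s IH].
  by rewrite big_nil.
by rewrite big_cons geq_min IH orbT.
Qed.
End BigMin.

Section Dist.
Variables (V : finType) (adj : rel V).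
Hypothesis sym : symmetric adj.
Local Notation dist := (dist adj).
Local Notation ecc := (ecc adj).

Lemma walkP n u v : reflect (exists p : seq V, [/\ size p = n, path adj u p & last u p = v])
  (walk_of_len adj n u v).
Proof.
apply: (iffP existsP).
  by case=> p /andP [h1 /eqP h2]; exists (val p); rewrite size_tuple.
case=> p [hs h1 h2]; have hs' : size p == n by rewrite hs.
by exists (Tuple hs'); rewrite /= h1 h2 eqxx.
Qed.

Lemma dist_le u v : dist u v <= #|V|.
Proof. exact: bigmin_leb. Qed.

Lemma dist_walk n u v : walk_of_len adj n u v -> n < #|V| -> dist u v <= n.
Proof.
move=> w nV; rewrite /Defs.dist.
exact: (@bigmin_leF _ (fun i : 'I_#|V| => walk_of_len adj i u v) (fun i => val i) _ (Ordinal nV)).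
Qed.

Lemma dist_witness u v : dist u v < #|V| -> walk_of_len adj (dist u v) u v.
Proof.
rewrite /Defs.dist.
case: (@bigmin_cases _ (fun i : 'I_#|V| => walk_of_len adj i u v) (fun i => val i) #|V|) => [-> | [i Pi ->]]; first by rewrite ltnn.
by [].
Qed.

Lemma dist0 u : dist u u = 0.
Proof.
apply/eqP; rewrite -leqn0; apply: dist_walk.
  by apply/walkP; exists [::].
by apply/card_gt0P; exists u.
Qed.

Lemma dist_eq0 u v : dist u v = 0 -> u = v.
Proof.
move=> h; have: dist u v < #|V| by rewrite h; apply/card_gt0P; exists u.
move/dist_witness; rewrite h => /walkP [p [hs _ <-]].
by case: p hs.
Qed.

Lemma dist_sym_le u v : dist u v <= dist v u.
Proof.
case: (ltnP (dist v u) #|V|) => h; last first.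
  by apply: leq_trans (dist_le u v) h.
move/dist_witness: (h) => /walkP [p [hs hp hl]].
apply: dist_walk => //; apply/walkP.
exists (rev (belast v p)); split.
- by rewrite size_rev size_belast.
- have := rev_path adj v p; rewrite hl => ->.
  by rewrite (eq_path (e' := adj)) // => x y; rewrite sym.
- case: p hs hp hl => [|y p] /= _ _; first by move=> ->.
  by move=> _; rewrite rev_cons last_rcons.
Qed.

Lemma dist_sym u v : dist u v = dist v u.
Proof. by apply/eqP; rewrite eqn_leq !dist_sym_le. Qed.

Lemma dist_tri u v w : dist u w <= dist u v + dist v w.
Proof.
case: (ltnP (dist u v) #|V|) => h1; last first.
  by apply: leq_trans (dist_le _ _) (leq_trans h1 (leq_addr _ _)).
case: (ltnP (dist v w) #|V|) => h2; last first.
  by apply: leq_trans (dist_le _ _) (leq_trans h2 (leq_addl _ _)).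
case: (ltnP (dist u v + dist v w) #|V|) => h3; last first.
  by apply: leq_trans (dist_le _ _) h3.
move/dist_witness: h1 => /walkP [p [hs hp hl]].
move/dist_witness: h2 => /walkP [q [hs' hq hl']].
apply: dist_walk => //; apply/walkP; exists (p ++ q); split.
- by rewrite size_cat hs hs'.
- by rewrite cat_path hp hl hq.
- by rewrite last_cat hl hl'.
Qed.

Lemma ecc_le u : ecc u <= #|V|.
Proof. by apply/bigmax_leqP => v _; apply: dist_le. Qed.

Lemma dist_le_ecc u v : dist u v <= ecc u.
Proof. by rewrite /Defs.ecc; apply: leq_bigmax. Qed.

Lemma ecc_tri u x : ecc u <= dist u x + ecc x.
Proof.
apply/bigmax_leqP => w _; apply: leq_trans (dist_tri u x w) _.
by rewrite leq_add2l dist_le_ecc.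
Qed.

End Dist.

Section Order.
Variables (V : finType) (adj : rel V).
Hypothesis sym : symmetric adj.
Local Notation dist := (dist adj).
Local Notation ecc := (ecc adj).
Local Notation prec := (prec adj).

Lemma prec_refl u : prec u u.
Proof. by rewrite /prec dist0. Qed.

Lemma prec_trans u x y : prec u x -> prec x y -> prec u y.
Proof.
rewrite /prec => /eqP h1 /eqP h2; rewrite eqn_leq ecc_tri /=.
by rewrite h1 h2 addnA leq_add2r dist_tri.
Qed.

Lemma exists_umax v : exists2 x, x \in Umax adj & prec v x.
Proof.
case: (@arg_minnP _ v (prec v) ecc (prec_refl v)) => x pvx xmin.
exists x => //; rewrite inE; apply/forallP => y; apply/implyP => pxy.
have := xmin y (prec_trans pvx pxy); move/eqP: pxy => ->.
rewrite -{2}(add0n (ecc y)) leq_add2r leqn0 => /eqP/(dist_eq0) ->.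
by rewrite eqxx.
Qed.

Lemma tight_Umax : tight_upper adj (Umax adj).
Proof.
move=> v; split; last by move=> x _; apply: ecc_tri.
by case: (exists_umax v) => x xU /eqP h; exists x.
Qed.

Lemma Umax_sub U : tight_upper adj U -> Umax adj \subset U.
Proof.
move=> tU; apply/subsetP => x xU; case: (tU x) => [[y yU h] _].
move: xU; rewrite inE => /forallP /(_ y) /implyP.
by rewrite /prec h eqxx => /(_ isT) /eqP <-.
Qed.

Lemma Umax_min U : tight_upper adj U ->
  #|Umax adj| <= #|U| /\ (#|U| = #|Umax adj| -> U = Umax adj).
Proof.
move=> tU; have sub := Umax_sub tU; split; first exact: subset_leq_card.
by move=> h; apply/setP => x; apply/esym; move/subset_cardP: sub => /(_ (esym h)) ->.
Qed.

End Order.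

Lemma exists_max (T : finType) (le : rel T) (x0 : T) :
  total le -> transitive le -> exists m, forall y, le y m.
Proof.
move=> tot tr.
have: forall s : seq T, exists m, forall y, y \in x0 :: s -> le y m.
  elim=> [|y s [m IH]].
    by exists x0 => y; rewrite inE => /eqP ->; case/orP: (tot x0 x0).
  case: (boolP (le y m)) => h.
    exists m => z; rewrite !inE => /or3P [/eqP->| /eqP->|zs]; first exact: IH (mem_head _ _).
      by [].
    by apply: IH; rewrite inE zs orbT.
  have hm : le m y by case/orP: (tot m y) => // h'; rewrite h' in h.
  exists y => z; rewrite !inE => /or3P [/eqP->| /eqP->|zs].
  - exact: tr (IH _ (mem_head _ _)) hm.
  - by case/orP: (tot y y).
  - by apply: tr hm; apply: IH; rewrite inE zs orbT.
case/(_ (enum T)) => m H; exists m => y; apply: H; by rewrite inE mem_enum orbT.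
Qed.

Section Alg.
Variables (V : finType) (disp : Order.disp_t) (R : orderType disp) (r : V -> R).

Record st := St { sQ : {set V}; sD : V -> V -> nat; sL : {set V}; sS : {set V}; sc : nat }.

Definition lbS (s : st) v := \max_(x in sL s) sD s x v.
Definition EcS (s : st) x := \max_y sD s x y.
Definition ubS (s : st) v := \big[minn/#|V|.+1]_(x in sQ s) (sD s x v + EcS s x).
Definition candS s v := lbS s v < ubS s v.

Definition addQ (s : st) x (dx : V -> nat) :=
  St (x |: sQ s) (fun y => if y == x then dx else sD s y) (sL s) (sS s) (sc s).+1.
Definition addL (s : st) a := St (sQ s) (sD s) (a |: sL s) (sS s) (sc s).
Definition addS (s : st) a := St (sQ s) (sD s) (sL s) (a |: sS s) (sc s).

Definition arel (dv : V -> nat) (w' w : V) : bool :=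
  (dv w' < dv w) || ((dv w' == dv w) && (r w' <= r w)%O).
Definition antip (dv : V -> nat) (v : V) : V :=
  odflt v [pick w | [forall w', arel dv w' w]].

Definition pad (x0 : V) (k : nat) (A : dalg V) : dalg V :=
  iter k (fun B => Ask x0 (fun _ => B)) A.

Definition finish (s : st) : dalg V :=
  let Um := [set x in sQ s | [forall y, (lbS s x == sD s x y + lbS s y) ==> (y == x)]] in
  let k := (#|Um| + 2 * #|sL s|) - sc s in
  match [pick x : V] with
  | Some x0 => pad x0 k (Ret (lbS s) (sL s) Um)
  | None => Ret (lbS s) (sL s) Um
  end.

Fixpoint alg (n : nat) (s : st) {struct n} : dalg V :=
  match n with
  | 0 => finish s
  | n'.+1 =>
    match [pick v | candS s v && [forall w, candS s w ==> (lbS s v <= lbS s w)]] with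
    | None => finish s
    | Some v => Ask v (fun dv =>
        let s1 := addQ s v dv in
        if lbS s v < \max_y dv y then
          let a := antip dv v in
          Ask a (fun da => alg n' (addL (addQ s1 a da) a))
        else alg n' (addS s1 v))
    end
  end.

Definition s0 : st := St set0 (fun _ _ => 0) set0 set0 0.

Lemma run_pad d x0 k A :
  run_out d (pad x0 k A) = run_out d A /\ run_queries d (pad x0 k A) = k + run_queries d A.
Proof. by elim: k => [|k [IH1 IH2]] //=; rewrite IH1 IH2. Qed.

Section Proofs.
Variable adj : rel V.
Hypothesis sym : symmetric adj.
Local Notation dist := (dist adj).
Local Notation ecc := (ecc adj).

Definition Inv (s : st) : Prop :=
  [/\ forall x, x \in sQ s -> sD s x =1 dist x,
      sL s \subset sQ s, sL s \subset antipodes adj r,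
      (forall x, x \in sS s -> [/\ x \in Umax adj, x \in sQ s & eccL adj (sL s) x = ecc x]) &
      sc s = #|sS s| + 2 * #|sL s| ].

Definition ubD (Q : {set V}) v := \big[minn/#|V|.+1]_(x in Q) (dist v x + ecc x).

Lemma lbS_D s v : Inv s -> lbS s v = eccL adj (sL s) v.
Proof.
case=> hD hLQ _ _ _; apply: eq_bigr => x xL.
by rewrite hD ?(subsetP hLQ) // (dist_sym sym).
Qed.

Lemma ubS_D s v : Inv s -> ubS s v = ubD (sQ s) v.
Proof.
case=> hD _ _ _ _; apply: eq_bigr => x xQ.
by rewrite /EcS (eq_bigr _ (fun y _ => hD x xQ y)) hD // (dist_sym sym).
Qed.

Lemma eccL_le L v : eccL adj L v <= ecc v.
Proof. by apply/bigmax_leqP => x _; apply: dist_le_ecc. Qed.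

Lemma ecc_le_ubD Q v : ecc v <= ubD Q v.
Proof.
apply: bigmin_ge; first exact: leqW (ecc_le _ _).
by move=> x _; apply: ecc_tri.
Qed.

Lemma eccL_mono (L L' : {set V}) v : L \subset L' -> eccL adj L v <= eccL adj L' v.
Proof.
move=> sub; apply/bigmax_leqP => x xL.
by apply: leq_bigmax_cond; apply: (subsetP sub).
Qed.

Lemma ubD_mono (Q Q' : {set V}) v : Q \subset Q' -> ubD Q' v <= ubD Q v.
Proof.
move=> sub; apply: bigmin_ge; first exact: bigmin_leb.
move=> x xQ; apply: bigmin_leF; exact: (subsetP sub).
Qed.

Lemma eccL_tri L v z : eccL adj L v <= dist v z + eccL adj L z.
Proof.
apply/bigmax_leqP => x xL; apply: leq_trans (dist_tri adj v z x) _.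
by rewrite leq_add2l; apply: leq_bigmax_cond.
Qed.

Lemma ubD_tri Q v z : ubD Q v <= dist v z + ubD Q z.
Proof.
rewrite {2}/ubD; case: (@bigmin_cases _ (fun x => x \in Q) (fun x => dist z x + ecc x) #|V|.+1) => [->|[x xQ ->]].
  have h : ubD Q v <= #|V|.+1 by apply: bigmin_leb.
  lia.
apply: leq_trans (_ : dist v x + ecc x <= _); first by apply: (@bigmin_leF _ (fun x => x \in Q) (fun x => dist v x + ecc x)).
by rewrite addnA leq_add2r dist_tri.
Qed.

Lemma key L Q v :
  eccL adj L v < ubD Q v ->
  (forall w, eccL adj L w < ubD Q w -> eccL adj L v <= eccL adj L w) ->
  ecc v <= eccL adj L v -> v \in Umax adj.
Proof.
move=> cv minv hv; rewrite inE; apply/forallP => z; apply/implyP => /eqP pz.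
case: (eqVneq z v) => // nz; exfalso.
have lbv : eccL adj L v = ecc v by apply/eqP; rewrite eqn_leq hv eccL_le.
have t1 := eccL_tri L v z.
have t2 := ubD_tri Q v z.
have ez := eccL_le L z.
have dpos : dist v z != 0 by apply/eqP => /dist_eq0 h; rewrite h eqxx in nz.
have ncz : ~~ (eccL adj L z < ubD Q z).
  apply/negP => /minv; lia.
lia.
Qed.

Lemma antip_spec v : let a := antip (dist v) v in
  is_antipode adj r v a /\ dist v a = ecc v.
Proof.
rewrite /antip; case: pickP => [a /forallP H | H].
  split; first by apply/forallP.
  apply/eqP; rewrite eqn_leq dist_le_ecc /=; apply/bigmax_leqP => w _.
  by case/orP: (H w) => [/ltnW|/andP [/eqP -> _]].
exfalso; case: (@exists_max V (arel (dist v)) v).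
- move=> x y; rewrite /arel; case: (ltngtP (dist v x) (dist v y)) => //= h.
  by rewrite ?h ?eqxx le_total.
- move=> y x z; rewrite /arel => /orP [h1|/andP [/eqP h1 h1']] /orP [h2|/andP [/eqP h2 h2']].
  + by rewrite (ltn_trans h1 h2).
  + by rewrite -h2 h1.
  + by rewrite h1 h2.
  + by rewrite h1 h2 eqxx (le_trans h1' h2') orbT.
- by move=> m Hm; have := H m; rewrite /=; move/negP; apply; apply/forallP.
Qed.

Definition cands s := [set v | candS s v].

Lemma addQ_D s x : (forall q, q \in sQ s -> sD s q =1 dist q) ->
  forall q, q \in sQ (addQ s x (dist x)) -> sD (addQ s x (dist x)) q =1 dist q.
Proof.
move=> hD q; rewrite /= !inE; case: (eqVneq q x) => [->|nqx] //= qQ.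
exact: hD.
Qed.

Lemma cand_mono s s' w : Inv s -> Inv s' -> sL s \subset sL s' -> sQ s \subset sQ s' ->
  candS s' w -> candS s w.
Proof.
move=> I I' sL sQ; rewrite /candS (lbS_D _ I) (lbS_D _ I') (ubS_D _ I) (ubS_D _ I') => h.
apply: leq_trans (ubD_mono w sQ); apply: leq_ltn_trans h; exact: eccL_mono.
Qed.

Lemma card_step s s' v n : (forall w, candS s' w -> candS s w) -> ~~ candS s' v ->
  candS s v -> #|cands s| <= n.+1 -> #|cands s'| <= n.
Proof.
move=> mono nv cv; rewrite (cardsD1 v) inE cv add1n ltnS; apply: leq_trans.
apply: subset_leq_card; apply/subsetP => w; rewrite !inE => cw.
by rewrite (mono _ cw) andbT; apply/eqP => e; move: nv; rewrite -e cw.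
Qed.

Definition Goal (n : nat) (s : st) : Prop :=
  let o := run_out dist (alg n s) in
  [/\ o.1.1 =1 ecc, tight_lower adj o.1.2 /\ o.1.2 \subset antipodes adj r, o.2 = Umax adj &
      sc s + run_queries dist (alg n s) = #|Umax adj| + 2 * #|o.1.2|].

Lemma finish_spec s : Inv s -> (forall v, ~~ candS s v) ->
  let o := run_out dist (finish s) in
  [/\ o.1.1 =1 ecc, tight_lower adj o.1.2 /\ o.1.2 \subset antipodes adj r, o.2 = Umax adj &
      sc s + run_queries dist (finish s) = #|Umax adj| + 2 * #|o.1.2|].
Proof.
move=> I nc; have [hD hLQ hLA hS hc] := I.
have lbE v : lbS s v = ecc v.
  apply/eqP; rewrite eqn_leq (lbS_D _ I) eccL_le /=.
  apply: leq_trans (ecc_le_ubD (sQ s) v) _; rewrite -(ubS_D _ I) -(lbS_D _ I) leqNgt; exact: nc.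
have UmE : [set x in sQ s | [forall y, (lbS s x == sD s x y + lbS s y) ==> (y == x)]] = Umax adj.
  apply/setP => x; rewrite !inE; case xQ: (x \in sQ s) => /=.
    by apply: eq_forallb => y; rewrite !lbE hD.
  apply/esym/negP => /forallP H.
  have ub : ubS s x = ecc x.
    apply/eqP; rewrite eqn_leq (ubS_D _ I) ecc_le_ubD andbT -(ubS_D _ I) -(lbE x) leqNgt.
    exact: nc.
  rewrite (ubS_D _ I) /ubD in ub.
  case: (@bigmin_cases _ (fun q => q \in sQ s) (fun q => dist x q + ecc q) #|V|.+1) => [h|[q qQ h]].
    by rewrite h in ub; have := ecc_le adj x; lia.
  rewrite h in ub; have := H q; rewrite /prec ub eqxx /= => /eqP qx.
  by rewrite qx xQ in qQ.
have scle : sc s <= #|Umax adj| + 2 * #|sL s|.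
  rewrite hc leq_add2r; apply: subset_leq_card; apply/subsetP => x /hS; by case.
rewrite /finish; case: pickP => [x0 _ | none].
  have [h1 h2] := run_pad dist x0 ((#|[set x in sQ s | [forall y, (lbS s x == sD s x y + lbS s y) ==> (y == x)]]| + 2 * #|sL s|) - sc s) (Ret (lbS s) (sL s) [set x in sQ s | [forall y, (lbS s x == sD s x y + lbS s y) ==> (y == x)]]).
  rewrite h1 h2 /= UmE; split => //; last by rewrite addn0; lia.
  by split => // v; rewrite -(lbS_D _ I) lbE.
rewrite /= UmE; split => //; first by split => // v; rewrite -(lbS_D _ I) lbE.
have c0 (A : {set V}) : #|A| = 0 by apply: eq_card0 => x; have := none x.
by rewrite hc !c0.
Qed.

Lemma alg_spec n s : Inv s -> #|cands s| <= n -> Goal n s.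
Proof.
elim: n s => [|n IH] s I hc.
  apply: finish_spec => // v; apply/negP => cv.
  move: hc; rewrite leqn0 cards_eq0 => /eqP E.
  have : v \in cands s by rewrite inE.
  by rewrite E inE.
have [hD hLQ hLA hS hcnt] := I.
rewrite /Goal /=; case: pickP => [v /andP [cv /forallP minv] | none]; last first.
  apply: finish_spec => // w; apply/negP => cw.
  case: (@arg_minnP _ w (candS s) (lbS s) cw) => v0 cv0 m0.
  have := none v0; rewrite cv0 /=; move/negP; apply.
  by apply/forallP => w'; apply/implyP; apply: m0.
have minv' : forall w, eccL adj (sL s) w < ubD (sQ s) w -> eccL adj (sL s) v <= eccL adj (sL s) w.
  move=> w; rewrite -(lbS_D _ I) -(ubS_D _ I) -!(lbS_D _ I) => cw.
  by have := minv w; rewrite /candS cw.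
have cv' : eccL adj (sL s) v < ubD (sQ s) v by rewrite -(lbS_D _ I) -(ubS_D _ I).
rewrite /=; case: ifP => hlt.
  rewrite (lbS_D _ I) in hlt.
  have [isA dA] := antip_spec v.
  set a := antip (dist v) v in isA dA *.
  set s' := addL (addQ (addQ s v (dist v)) a (dist a)) a.
  have aL : a \notin sL s.
    apply/negP => aL; have := @leq_bigmax_cond _ (fun x => x \in sL s) (fun x => dist v x) a aL.
    rewrite dA => h; have : ecc v < ecc v by apply: leq_ltn_trans h hlt.
    by rewrite ltnn.
  have I' : Inv s'.
    split.
    - by apply: addQ_D; apply: addQ_D.
    - apply/subsetP => x; rewrite /= !inE => /orP [->|xL] //.
      by rewrite (subsetP hLQ) ?orbT.
    - apply/subsetP => x; rewrite /= !inE => /orP [/eqP ->|xL].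
        by apply/existsP; exists v.
      by move/(subsetP hLA): xL; rewrite inE.
    - move=> x /= xS; have [h1 h2 h3] := hS x xS; split => //.
        by rewrite !inE h2 !orbT.
      apply/eqP; rewrite eqn_leq eccL_le -h3 eccL_mono //.
      by apply/subsetP => y yL; rewrite inE yL orbT.
    - by rewrite /= hcnt cardsU1 aL; lia.
  have nv : ~~ candS s' v.
    rewrite /candS (lbS_D _ I') (ubS_D _ I') -leqNgt.
    apply: leq_trans (_ : ecc v <= _); last first.
      rewrite -dA; apply: (@leq_bigmax_cond _ (fun x => x \in sL s') (fun x => dist v x) a); by rewrite /= !inE eqxx.
    apply: leq_trans (_ : dist v v + ecc v <= _); last by rewrite dist0.
    by apply: (@bigmin_leF _ (fun x => x \in sQ s') (fun x => dist v x + ecc x)); rewrite /= !inE eqxx orbT.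
  have mono : forall w, candS s' w -> candS s w.
    move=> w; apply: cand_mono => //.
      by apply/subsetP => y yL; rewrite /= inE yL orbT.
    by apply/subsetP => y yL; rewrite /= !inE yL !orbT.
  have [H1 H2 H3 H4] := IH s' I' (card_step mono nv cv hc).
  split => //; rewrite -H4 /= /s'; lia.
move/negbT: hlt; rewrite (lbS_D _ I) -leqNgt => hle.
have vU : v \in Umax adj by apply: (key cv' minv' hle).
have vS : v \notin sS s.
  apply/negP => vS; have [_ vQ h3] := hS v vS.
  move: cv'; rewrite h3 ltnNge; move/negP; apply.
  apply: leq_trans (_ : dist v v + ecc v <= _); last by rewrite dist0.
  by apply: (@bigmin_leF _ (fun x => x \in sQ s) (fun x => dist v x + ecc x)).
set s' := addS (addQ s v (dist v)) v.
have I' : Inv s'.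
  split.
  - by apply: addQ_D.
  - by apply/subsetP => x xL; rewrite /= inE (subsetP hLQ) ?orbT.
  - by [].
  - move=> x; rewrite /= in_setU1 => /orP [/eqP ->|xS].
      split => //; first by rewrite in_setU1 eqxx.
      by apply/eqP; rewrite eqn_leq eccL_le.
    have [h1 h2 h3] := hS x xS; split => //.
    by rewrite in_setU1 h2 orbT.
  - by rewrite /= hcnt cardsU1 vS; lia.
have nv : ~~ candS s' v.
  rewrite /candS (lbS_D _ I') (ubS_D _ I') -leqNgt.
  apply: leq_trans (_ : ecc v <= _) => //.
  apply: leq_trans (_ : dist v v + ecc v <= _); last by rewrite dist0.
  by apply: (@bigmin_leF _ (fun x => x \in sQ s') (fun x => dist v x + ecc x)); rewrite /= !inE eqxx.
have mono : forall w, candS s' w -> candS s w.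
  move=> w; apply: cand_mono => //.
  by apply/subsetP => y yL; rewrite /= inE yL orbT.
have [H1 H2 H3 H4] := IH s' I' (card_step mono nv cv hc).
split => //; rewrite -H4 /= /s'; lia.
Qed.

End Proofs.
End Alg.

Theorem theorem5 :
  forall (V : finType) (disp : Order.disp_t) (R : orderType disp) (r : V -> R),
  injective r ->
  exists A : dalg V,
  forall adj : rel V,
  undirected_graph adj -> connected_graph adj ->
  let d := dist adj in
  let '(e, L, U) := run_out d A in
  [/\ e =1 ecc adj,
      tight_lower adj L /\ L \subset antipodes adj r,
      U = Umax adj,
      (tight_upper adj (Umax adj) /\
       forall U' : {set V}, tight_upper adj U' ->
         #|Umax adj| <= #|U'| /\ (#|U'| = #|Umax adj| -> U' = Umax adj)) &
      run_queries d A = #|Umax adj| + 2 * #|L|].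
Proof.
move=> V disp R r _; exists (alg r #|V| (s0 V)) => adj [sym _] _ /=.
have I0 : Inv r adj (s0 V).
  split => //=; try by rewrite sub0set.
  - by move=> x; rewrite inE.
  - by move=> x; rewrite inE.
  - by rewrite cards0.
have hc : #|cands (s0 V)| <= #|V| by apply: max_card.
have := alg_spec sym I0 hc; rewrite /Goal /=.
case: (run_out (dist adj) (alg r #|V| (s0 V))) => [[e L] U] /= [H1 H2 H3 H4].
split => //; first by split; [exact: tight_Umax | move=> U'; exact: Umax_min].
Qed.
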